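(* Let $N\ge1$ and suppose the parameter space $\Theta$ of the correlated Bernoulli random graph model is nondegenerate and satisfies $\Theta\subseteq\mathcal{R}^o$ (all $\varrho_i=0$). Then the statistic $$\mathfrak{d}_{X,Y}\left(1-\mathfrak{d}_{X,Y}\right)-\frac{1}{2N}\left(1-\frac{1}{2N}\right)\Delta$$ is the UMVU estimator of $\sigma^2=\frac1N\sum_{i=1}^N(p_i-\mu)^2$, where $\mu=\frac1N\sum_{i=1}^Np_i$.
   Context: Correlated Bernoulli random graph model: fix a positive integer $N$ and let $\mathcal{R}=\{(p_1,\dots,p_N,\varrho_1,\dots,\varrho_N): p_i,\varrho_i\in[0,1]\}$; a parameter space is any $\Theta\subseteq\mathcal{R}$. For $\theta\in\Theta$, the pairs $(X_i,Y_i)$, $i=1,\dots,N$, of $\{0,1\}$-valued random variables are independent, $X_i,Y_i$ are marginally Bernoulli$(p_i)$ with Pearson correlation $\varrho_i$. Sample space $\mathcal{X}=\{(x,y):x,y\in\{0,1\}^N\}$. Let $\mathcal{R}^o=\{(p_1,\dots,p_N,0,\dots,0):p_i\in\mathbb{R}\}$; $\Theta$ is nondegenerate if $\Theta\cap\mathcal{R}^o$ has an interior point relative to $\mathcal{R}^o$. Statistics: $\mathfrak{d}_X=\frac1N\sum_iX_i$, $\mathfrak{d}_Y=\frac1N\sum_iY_i$, $\mathfrak{d}_{X,Y}=\frac12(\mathfrak{d}_X+\mathfrak{d}_Y)$, and $\Delta=\sum_{i=1}^N(X_i-Y_i)^2$ (number of coordinates where $x$ and $y$ disagree). UMVU means unbiased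 (expectation equals the target for every $\theta\in\Theta$) with minimum variance among all unbiased estimators for every $\theta\in\Theta$. *)

(* Defs.v *)
From HB Require Import structures.
From mathcomp Require Import all_boot all_order all_algebra.
From mathcomp Require Import reals.
Set Implicit Arguments. Unset Strict Implicit. Unset Printing Implicit Defensive.
Import Order.TTheory GRing.Theory Num.Theory.
Local Open Scope ring_scope.

(* A parameter theta = (p, rho) with p, rho : 'I_N -> R. *)
Definition param (R : realType) (N : nat) : Type := (('I_N -> R) * ('I_N -> R))%type.

Definition sample (N : nat) : finType :=
  ({ffun 'I_N -> bool} * {ffun 'I_N -> bool})%type.

Definition in_Rspace (R : realType) (N : nat) (th : param R N) : Prop :=
  forall i, 0 <= th.1 i <= 1 /\ 0 <= th.2 i <= 1.

(* Joint pmf of a {0,1}-valued pair, both marginals Bernoulli(p),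
   Pearson correlation rho. *)
Definition pair_pmf (R : realType) (p rho : R) (a b : bool) : R :=
  match a, b with
  | true, true => p ^+ 2 + rho * p * (1 - p)
  | true, false | false, true => p * (1 - p) * (1 - rho)
  | false, false => (1 - p) ^+ 2 + rho * p * (1 - p)
  end.

Definition model_pmf (R : realType) (N : nat) (th : param R N) (s : sample N) : R :=
  \prod_(i < N) pair_pmf (th.1 i) (th.2 i) (s.1 i) (s.2 i).

Definition Exp (R : realType) (N : nat) (th : param R N) (T : sample N -> R) : R :=
  \sum_(s : sample N) model_pmf th s * T s.

Definition Var (R : realType) (N : nat) (th : param R N) (T : sample N -> R) : R :=
  Exp th (fun s => (T s - Exp th T) ^+ 2).

Definition unbiased (R : realType) (N : nat) (Theta : param R N -> Prop)
  (T : sample N -> R) (g : param R N -> R) : Prop :=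
  forall th, Theta th -> Exp th T = g th.

Definition UMVU (R : realType) (N : nat) (Theta : param R N -> Prop)
  (T : sample N -> R) (g : param R N -> R) : Prop :=
  unbiased Theta T g /\
  forall T' : sample N -> R, unbiased Theta T' g ->
    forall th, Theta th -> Var th T <= Var th T'.

(* Theta is nondegenerate: Theta ∩ R^o has an interior point relative to R^o,
   where R^o = {(p, 0) : p in R^N}. *)
Definition nondegenerate_param (R : realType) (N : nat) (Theta : param R N -> Prop) : Prop :=
  exists (p0 : 'I_N -> R) (eps : R), 0 < eps /\
    forall p : 'I_N -> R, (forall i, `|p i - p0 i| < eps) -> Theta (p, fun _ => 0).

Definition bnat (R : realType) (b : bool) : R := (nat_of_bool b)%:R.

Definition dX (R : realType) (N : nat) (s : sample N) : R :=
  N%:R^-1 * \sum_(i < N) bnat R (s.1 i).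
Definition dY (R : realType) (N : nat) (s : sample N) : R :=
  N%:R^-1 * \sum_(i < N) bnat R (s.2 i).
Definition dXY (R : realType) (N : nat) (s : sample N) : R :=
  2^-1 * (dX R s + dY R s).
Definition Delta (R : realType) (N : nat) (s : sample N) : R :=
  \sum_(i < N) (bnat R (s.1 i) - bnat R (s.2 i)) ^+ 2.

Definition mu (R : realType) (N : nat) (th : param R N) : R :=
  N%:R^-1 * \sum_(i < N) th.1 i.
Definition sigma2 (R : realType) (N : nat) (th : param R N) : R :=
  N%:R^-1 * \sum_(i < N) (th.1 i - mu th) ^+ 2.

Definition T_est (R : realType) (N : nat) (s : sample N) : R :=
  dXY R s * (1 - dXY R s)
  - (2 * N%:R)^-1 * (1 - (2 * N%:R)^-1) * Delta R s.

(* Main.v *)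
Require Import Defs.
From HB Require Import structures.
From mathcomp Require Import all_boot all_order all_algebra.
From mathcomp Require Import reals ring lra.
Set Implicit Arguments. Unset Strict Implicit. Unset Printing Implicit Defensive.
Import Order.TTheory GRing.Theory Num.Theory.
Local Open Scope ring_scope.

Lemma sum_prod (R : realType) (N : nat) (F : 'I_N -> bool -> bool -> R) :
  \sum_(s : sample N) \prod_i F i (s.1 i) (s.2 i) =
  \prod_i \sum_(a : bool) \sum_(b : bool) F i a b.
Proof.
rewrite bigA_distr_bigA /= -(pair_bigA _ (fun (f g : {ffun 'I_N -> bool}) => \prod_i F i (f i) (g i))) /=.
apply: eq_bigr => f _.
rewrite (bigA_distr_bigA (fun i b => F i (f i) b)) //.
Qed.

Definition w (R : realType) (q : R) (a b : bool) : R := pair_pmf q 0 a b.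

Lemma w_sum (R : realType) (q : R) : \sum_(a : bool) \sum_(b : bool) w q a b = 1.
Proof. rewrite !big_bool /= /w /pair_pmf. ring. Qed.

Lemma w_ge0 (R : realType) (q : R) a b : 0 <= q <= 1 -> 0 <= w q a b.
Proof.
move=> /andP[h0 h1]; have h2 : 0 <= 1 - q by rewrite subr_ge0.
rewrite /w /pair_pmf; case: a; case: b; rewrite ?mul0r ?mulr0 ?addr0 ?subr0 ?mulr1;
  by rewrite ?exprn_ge0 ?mulr_ge0.
Qed.

Definition th0 (R : realType) (N : nat) (q : 'I_N -> R) : param R N := (q, fun _ => 0).

Lemma Exp_prod (R : realType) (N : nat) (q : 'I_N -> R) (F : 'I_N -> bool -> bool -> R) :
  Exp (th0 q) (fun s => \prod_i F i (s.1 i) (s.2 i)) =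
  \prod_i \sum_(a : bool) \sum_(b : bool) w (q i) a b * F i a b.
Proof.
rewrite /Exp -sum_prod; apply: eq_bigr => s _.
by rewrite /model_pmf -big_split.
Qed.

Lemma Exp1 (R : realType) (N : nat) (q : 'I_N -> R) j (f : bool -> bool -> R) :
  Exp (th0 q) (fun s => f (s.1 j) (s.2 j)) =
  \sum_(a : bool) \sum_(b : bool) w (q j) a b * f a b.
Proof.
pose G i := if i == j then f else (fun _ _ => 1 : R).
transitivity (Exp (th0 q) (fun s => \prod_i G i (s.1 i) (s.2 i))).
  apply: eq_bigr => s _; congr (_ * _).
  by rewrite (bigD1 j) //= /G eqxx big1 ?mulr1 // => i /negbTE ->.
rewrite Exp_prod (bigD1 j) //= [X in _ * X]big1 ?mulr1 /G ?eqxx // => i /negbTE hi.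
rewrite hi -[RHS](w_sum (q i)); apply: eq_bigr => a _; apply: eq_bigr => b _.
by rewrite mulr1.
Qed.

Lemma Exp2 (R : realType) (N : nat) (q : 'I_N -> R) j k (f g : bool -> bool -> R) :
  j != k ->
  Exp (th0 q) (fun s => f (s.1 j) (s.2 j) * g (s.1 k) (s.2 k)) =
  (\sum_(a : bool) \sum_(b : bool) w (q j) a b * f a b) *
  (\sum_(a : bool) \sum_(b : bool) w (q k) a b * g a b).
Proof.
move=> njk.
pose G i := if i == j then f else if i == k then g else (fun _ _ => 1 : R).
have Gj : G j = f by rewrite /G eqxx.
have Gk : G k = g by rewrite /G eq_sym (negbTE njk) eqxx.
have Go : forall i, i != j -> i != k -> G i = (fun _ _ => 1 : R).
  by move=> i /negbTE h1 /negbTE h2; rewrite /G h1 h2.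
transitivity (Exp (th0 q) (fun s => \prod_i G i (s.1 i) (s.2 i))).
  apply: eq_bigr => s _; congr (_ * _).
  rewrite (bigD1 j) // (bigD1 k) ?(eq_sym k j) // Gj Gk big1; first by rewrite /= mulr1.
  by move=> i /andP[h1 h2]; rewrite Go.
rewrite Exp_prod (bigD1 j) // (bigD1 k) ?(eq_sym k j) // Gj Gk /=.
rewrite [X in _ * (_ * X)]big1; first by rewrite /= mulr1.
move=> i /andP[h1 h2]; rewrite Go // -[RHS](w_sum (q i)); apply: eq_bigr => a _; apply: eq_bigr => b _.
by rewrite mulr1.
Qed.

Lemma ExpD (R : realType) (N : nat) th (f g : sample N -> R) :
  Exp th (fun s => f s + g s) = Exp th f + Exp th g.
Proof. by rewrite /Exp -big_split; apply: eq_bigr => s _; rewrite mulrDr. Qed.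
Lemma ExpB (R : realType) (N : nat) th (f g : sample N -> R) :
  Exp th (fun s => f s - g s) = Exp th f - Exp th g.
Proof. by rewrite /Exp -sumrB; apply: eq_bigr => s _; rewrite mulrBr. Qed.
Lemma ExpZ (R : realType) (N : nat) th c (f : sample N -> R) :
  Exp th (fun s => c * f s) = c * Exp th f.
Proof. by rewrite /Exp mulr_sumr; apply: eq_bigr => s _; rewrite mulrCA. Qed.
Lemma ExpS (R : realType) (N : nat) th (f : 'I_N -> sample N -> R) :
  Exp th (fun s => \sum_i f i s) = \sum_i Exp th (f i).
Proof.
rewrite /Exp exchange_big; apply: eq_bigr => s _; by rewrite mulr_sumr.
Qed.
Lemma Exp_ext (R : realType) (N : nat) th (f g : sample N -> R) :
  (forall s, f s = g s) -> Exp th f = Exp th g.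
Proof. by move=> h; apply: eq_bigr => s _; rewrite h. Qed.

Definition uu (R : realType) (N : nat) (i : 'I_N) (s : sample N) : R :=
  bnat R (s.1 i) + bnat R (s.2 i).
Definition vv (R : realType) (N : nat) (i : 'I_N) (s : sample N) : R :=
  (bnat R (s.1 i) - bnat R (s.2 i)) ^+ 2.

Lemma T_expand (R : realType) (N : nat) (s : sample N) :
  T_est R s = (2 * N%:R)^-1 * \sum_i uu R i s
    - ((2 * N%:R)^-1) ^+ 2 * \sum_i \sum_k (uu R i s * uu R k s)
    - (2 * N%:R)^-1 * (1 - (2 * N%:R)^-1) * \sum_i vv R i s.
Proof.
have hd : dXY R s = (2 * N%:R)^-1 * \sum_i uu R i s.
  rewrite /dXY /dX /dY -mulrDr mulrA -invfM big_split /=.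
  by [].
rewrite /T_est hd /Delta.
have -> : \sum_i \sum_k (uu R i s * uu R k s) = (\sum_i uu R i s) ^+ 2.
  by rewrite expr2 mulr_suml; apply: eq_bigr => i _; rewrite mulr_sumr.
rewrite /vv; ring.
Qed.

Lemma Eu (R : realType) (N : nat) (q : 'I_N -> R) i :
  Exp (th0 q) (fun s => uu R i s) = 2 * q i.
Proof.
rewrite (Exp1 q i (fun a b => bnat R a + bnat R b)) !big_bool /= /w /pair_pmf /bnat /=.
ring.
Qed.

Lemma Ev (R : realType) (N : nat) (q : 'I_N -> R) i :
  Exp (th0 q) (fun s => vv R i s) = 2 * q i * (1 - q i).
Proof.
rewrite (Exp1 q i (fun a b => (bnat R a - bnat R b) ^+ 2)) !big_bool /= /w /pair_pmf /bnat /=.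
ring.
Qed.

Lemma Euu (R : realType) (N : nat) (q : 'I_N -> R) i k :
  Exp (th0 q) (fun s => uu R i s * uu R k s) =
  4 * q i * q k + (i == k)%:R * (2 * q i - 2 * q i ^+ 2).
Proof.
have [->|nik] := eqVneq i k.
  rewrite (Exp1 q k (fun a b => (bnat R a + bnat R b) * (bnat R a + bnat R b))).
  rewrite !big_bool /= /w /pair_pmf /bnat /=. ring.
rewrite (Exp2 q (fun a b => bnat R a + bnat R b) (fun a b => bnat R a + bnat R b) nik).
rewrite !big_bool /= /w /pair_pmf /bnat /=. ring.
Qed.

Lemma ET (R : realType) (N : nat) (q : 'I_N -> R) :
  (0 < N)%N -> Exp (th0 q) (T_est R (N:=N)) = sigma2 (th0 q).
Proof.
move=> N0.
have nz : N%:R != 0 :> R by rewrite pnatr_eq0 -lt0n.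
rewrite (Exp_ext _ (@T_expand R N)).
set a := (2 * N%:R)^-1.
rewrite (ExpB _ (fun s => a * \sum_i uu R i s - a ^+ 2 * \sum_i \sum_k (uu R i s * uu R k s))
   (fun s => a * (1 - a) * \sum_i vv R i s)).
rewrite (ExpB _ (fun s => a * \sum_i uu R i s) (fun s => a ^+ 2 * \sum_i \sum_k (uu R i s * uu R k s))).
rewrite !ExpZ.
rewrite (ExpS _ (fun i s => uu R i s)) (ExpS _ (fun i s => vv R i s)).
rewrite (ExpS _ (fun i s => \sum_k (uu R i s * uu R k s))).
under [X in _ - _ * X - _]eq_bigr => i _ do rewrite (ExpS _ (fun k s => uu R i s * uu R k s)).
under [X in _ - _ * X - _]eq_bigr do under eq_bigr do rewrite Euu.
rewrite (eq_bigr _ (fun i _ => Ev q i)) (eq_bigr _ (fun i _ => Eu q i)).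
have -> : \sum_(i < N) \sum_(k < N) (4 * q i * q k + (i == k)%:R * (2 * q i - 2 * q i ^+ 2)) =
          \sum_(i < N) \sum_(k < N) 4 * q i * q k + \sum_(i < N) (2 * q i - 2 * q i ^+ 2).
  rewrite -big_split; apply: eq_bigr => i _; rewrite big_split /=; congr (_ + _).
  rewrite (bigD1 i) //= eqxx mul1r big1 ?addr0 //.
  by move=> k; rewrite eq_sym => /negbTE ->; rewrite mul0r.
have -> : \sum_(i < N) \sum_(k < N) 4 * q i * q k = 4 * (\sum_i q i) ^+ 2.
  rewrite expr2 mulr_suml mulr_sumr; apply: eq_bigr => i _.
  by rewrite mulr_sumr mulr_sumr; apply: eq_bigr => k _; ring.
rewrite /sigma2 /mu /=.
have -> : \sum_(i < N) (q i - N%:R^-1 * \sum_(i0 < N) q i0) ^+ 2 =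
   \sum_i q i ^+ 2 - 2 * (N%:R^-1 * \sum_(i0 < N) q i0) * \sum_i q i
     + N%:R * (N%:R^-1 * \sum_(i0 < N) q i0) ^+ 2.
  set m := N%:R^-1 * _.
  have -> : N%:R * m ^+ 2 = \sum_(i < N) m ^+ 2 by rewrite sumr_const card_ord mulr_natl.
  rewrite mulr_sumr -!sumrB -big_split /=.
  by apply: eq_bigr => i _; ring.
rewrite -!mulr_sumr !sumrB -!mulr_sumr.
set S1 := \sum_i q i. set S2 := \sum_i q i ^+ 2.
have -> : \sum_(i < N) 2 * q i * (1 - q i) = 2 * S1 - 2 * S2.
  by rewrite /S1 /S2 !mulr_sumr -sumrB; apply: eq_bigr => i _; ring.
rewrite /a. field. by rewrite nz.
Qed.

Definition Zs (N : nat) (s : sample N) (i : 'I_N) : nat := (s.1 i + s.2 i)%N.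
Definition inv (R : realType) (N : nat) (F : sample N -> R) :=
  forall s t, (forall i, Zs s i = Zs t i) -> F s = F t.
Definition GG (R : realType) (N : nat) (k : nat) (F : sample N -> R) (q : 'I_N -> R) :=
  \sum_(s : sample N) (\prod_(i < N | (i < k)%N) w (q i) (s.1 i) (s.2 i)) * F s.
Definition HH (R : realType) (N : nat) (k : nat) (F : sample N -> R) (t : sample N) :=
  \sum_(s : sample N) (\prod_(i < N | (i < k)%N) ((Zs s i == Zs t i)%:R : R)) * F s.
Definition Fc (R : realType) (N : nat) (j : 'I_N) (c : nat) (F : sample N -> R) :=
  fun s => ((Zs s j == c)%:R : R) * F s.
Definition upd (R : realType) (N : nat) (q : 'I_N -> R) (j : 'I_N) (v : R) :=
  fun i => if i == j then v else q i.

Lemma quad (R : realType) (c d A B C : R) : d != 0 ->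
  (forall v, v = c \/ v = c + d \/ v = c - d ->
     v ^+ 2 * A + v * (1 - v) * B + (1 - v) ^+ 2 * C = 0) ->
  A = 0 /\ B = 0 /\ C = 0.
Proof.
move=> d0 h.
pose f v := v ^+ 2 * A + v * (1 - v) * B + (1 - v) ^+ 2 * C.
have h0 : f c = 0 := h c (or_introl erefl).
have h1 : f (c + d) = 0 := h (c + d) (or_intror (or_introl erefl)).
have h2 : f (c - d) = 0 := h (c - d) (or_intror (or_intror erefl)).
have eA : (A - B + C) * (2 * d ^+ 2) = f (c + d) + f (c - d) - 2 * f c by rewrite /f; ring.
rewrite h0 h1 h2 addr0 mulr0 subr0 in eA.
have nd : 2 * d ^+ 2 != 0 by rewrite mulf_neq0 ?expf_neq0 // pnatr_eq0.
have eA' : A - B + C = 0 by apply/eqP; rewrite -(mulIr_eq0 _ (mulIf nd)) eA.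
have eB : (B - 2 * C) * (2 * d) = f (c + d) - f (c - d) - (A - B + C) * (4 * c * d) by rewrite /f; ring.
rewrite h1 h2 eA' subrr mul0r subr0 in eB.
have nd2 : 2 * d != 0 by rewrite mulf_neq0 // pnatr_eq0.
have eB' : B - 2 * C = 0 by apply/eqP; rewrite -(mulIr_eq0 _ (mulIf nd2)) eB.
have eC : C = f c - (A - B + C) * c ^+ 2 - (B - 2 * C) * c by rewrite /f; ring.
rewrite h0 eA' eB' !mul0r !subr0 in eC.
split; last split => //.
  by move: eA' eB'; rewrite eC; lra.
by move: eB'; rewrite eC; lra.
Qed.

Lemma prod_split (R : realType) (N k : nat) (hk : (k < N)%N) (f : 'I_N -> R) :
  \prod_(i < N | (i < k.+1)%N) f i = f (Ordinal hk) * \prod_(i < N | (i < k)%N) f i.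
Proof.
rewrite (bigD1 (Ordinal hk)) //=; congr (_ * _); apply: eq_bigl => i.
by rewrite ltnS -val_eqE /= andbC -ltn_neqAle.
Qed.

Lemma Gstep (R : realType) (N k : nat) (hk : (k < N)%N) F (q : 'I_N -> R) :
  let j := Ordinal hk in
  GG k.+1 F q = q j ^+ 2 * GG k (Fc j 2 F) q + q j * (1 - q j) * GG k (Fc j 1 F) q
     + (1 - q j) ^+ 2 * GG k (Fc j 0 F) q.
Proof.
move=> j; rewrite /GG !mulr_sumr -!big_split /=; apply: eq_bigr => s _.
rewrite prod_split -/j /Fc /Zs.
case: (s.1 j); case: (s.2 j); rewrite /w /pair_pmf /=; ring.
Qed.

Lemma Hstep (R : realType) (N k : nat) (hk : (k < N)%N) (F : sample N -> R) t :
  HH k.+1 F t = HH k (Fc (Ordinal hk) (Zs t (Ordinal hk)) F) t.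
Proof.
rewrite /HH; apply: eq_bigr => s _; rewrite prod_split /Fc; ring.
Qed.

Lemma Gupd (R : realType) (N k : nat) (j : 'I_N) F (q : 'I_N -> R) v :
  (k <= j)%N -> GG k F (upd q j v) = GG k F q.
Proof.
move=> kj; rewrite /GG; apply: eq_bigr => s _; congr (_ * _).
apply: eq_bigr => i ik; rewrite /upd.
case: eqP => // eij; move: ik; rewrite eij => jk.
by move: (leq_trans jk kj); rewrite ltnn.
Qed.

Lemma compl_ind (R : realType) (N : nat) (p0 : 'I_N -> R) (eps : R) : 0 < eps ->
  forall k, (k <= N)%N -> forall F, inv F ->
  (forall q, (forall i, `|q i - p0 i| < eps) -> GG k F q = 0) ->
  forall t, HH k F t = 0.
Proof.
move=> he; elim => [|k IH] hk F hF hG t.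
  transitivity (GG 0 F p0).
    have p0f : (fun i : 'I_N => (i < 0)%N) =1 xpred0 by move=> i; rewrite ltn0.
    rewrite /HH /GG; apply: eq_bigr => s _; rewrite !(big_pred0 _ _ _ _ p0f) //.
  by apply: hG => i; rewrite subrr normr0.
rewrite Hstep; apply: IH; first exact: ltnW.
  by move=> s s' e; rewrite /Fc e (hF s s' e).
move=> q hq.
set j := Ordinal hk.
have all3 : GG k (Fc j 2 F) q = 0 /\ GG k (Fc j 1 F) q = 0 /\ GG k (Fc j 0 F) q = 0.
  apply: (@quad R (p0 j) (eps / 2)); first by rewrite gt_eqF // divr_gt0.
  move=> v hv.
  have hq' : forall i, `|upd q j v i - p0 i| < eps.
    move=> i; rewrite /upd; case: eqP => [->|_]; last exact: hq.
    case: hv => [->|[->|->]].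
    - by rewrite subrr normr0.
    - have -> : p0 j + eps / 2 - p0 j = eps / 2 by ring.
      rewrite gtr0_norm; last by rewrite divr_gt0.
      by rewrite ltr_pdivrMr // ltr_pMr // ltr1n.
    - have -> : p0 j - eps / 2 - p0 j = - (eps / 2) by ring.
      rewrite normrN gtr0_norm; last by rewrite divr_gt0.
      by rewrite ltr_pdivrMr // ltr_pMr // ltr1n.
  have := hG _ hq'; rewrite (Gstep hk) -/j.
  rewrite !Gupd //= /upd eqxx //.
case: all3 => [e2 [e1 e0]].
have : (Zs t j = 0 \/ Zs t j = 1 \/ Zs t j = 2)%N.
  by rewrite /Zs; case: (t.1 j); case: (t.2 j); auto.
by case=> [->|[->|->]].
Qed.

Lemma complete (R : realType) (N : nat) (p0 : 'I_N -> R) (eps : R) : 0 < eps ->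
  forall F, inv F ->
  (forall q, (forall i, `|q i - p0 i| < eps) -> Exp (th0 q) F = 0) ->
  forall t, F t = 0.
Proof.
move=> he F hF hE t.
have pN : forall (f : 'I_N -> R), \prod_(i < N | (i < N)%N) f i = \prod_i f i.
  by move=> f; apply: eq_bigl => i; rewrite ltn_ord.
have hHH : HH N F t = F t * \sum_(s : sample N) \prod_i ((Zs s i == Zs t i)%:R : R).
  rewrite /HH mulr_sumr; apply: eq_bigr => s _; rewrite pN mulrC.
  case: (boolP [forall i, Zs s i == Zs t i]) => [/forallP h|].
    by rewrite (hF s t) // => i; apply/eqP.
  rewrite negb_forall => /existsP[i /negbTE hi].
  by rewrite (bigD1 i) //= hi mul0r !mulr0.
have pos : 0 < \sum_(s : sample N) \prod_i ((Zs s i == Zs t i)%:R : R).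
  have e1 : \prod_i ((Zs t i == Zs t i)%:R : R) = 1 by apply: big1 => i _; rewrite eqxx.
  rewrite (bigD1 t) //= e1.
  have nn : 0 <= \sum_(s | s != t) \prod_i ((Zs s i == Zs t i)%:R : R).
    by apply: sumr_ge0 => s _; apply: prodr_ge0 => i _; exact: ler0n.
  lra.
have : HH N F t = 0.
  apply: (@compl_ind R N p0 eps he N (leqnn N) F hF) => q hq; rewrite -(hE q hq) /GG /Exp; apply: eq_bigr => s _.
  by rewrite pN.
by rewrite hHH; move/eqP; rewrite mulf_eq0 (gt_eqF pos) orbF => /eqP.
Qed.

Definition sw (N : nat) (u : {ffun 'I_N -> bool}) (s : sample N) : sample N :=
  ([ffun i => if u i then s.2 i else s.1 i], [ffun i => if u i then s.1 i else s.2 i]).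

Lemma swK (N : nat) (u : {ffun 'I_N -> bool}) : cancel (sw u) (sw u).
Proof.
move=> [x y]; rewrite /sw /=; congr pair; apply/ffunP => i; rewrite !ffunE;
  by case: (u i).
Qed.

Lemma sw_comp (N : nat) (u v : {ffun 'I_N -> bool}) s :
  sw v (sw u s) = sw [ffun i => u i (+) v i] s.
Proof.
rewrite /sw /=; congr pair; apply/ffunP => i; rewrite !ffunE;
  by case: (u i); case: (v i).
Qed.

Lemma pmf_sw (R : realType) (N : nat) (th : param R N) u s :
  model_pmf th (sw u s) = model_pmf th s.
Proof.
apply: eq_bigr => i _; rewrite /sw /= !ffunE.
by case: (u i) => //; case: (s.1 i); case: (s.2 i).
Qed.

Lemma Zs_sw (N : nat) u (s : sample N) i : Zs (sw u s) i = Zs s i.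
Proof. by rewrite /Zs /sw /= !ffunE; case: (u i) => //; rewrite addnC. Qed.

Lemma sw_exists (N : nat) (s t : sample N) :
  (forall i, Zs s i = Zs t i) -> t = sw [ffun i => s.1 i != t.1 i] s.
Proof.
move: s t => [x y] [x' y'] /= h; rewrite /sw /=; congr pair; apply/ffunP => i;
  rewrite !ffunE; move: (h i); rewrite /Zs /=;
  by case: (x i); case: (y i); case: (x' i); case: (y' i).
Qed.

Lemma xor_inj (N : nat) (u0 : {ffun 'I_N -> bool}) :
  injective (fun u : {ffun 'I_N -> bool} => [ffun i => u0 i (+) u i]).
Proof.
move=> u1 u2 /ffunP e; apply/ffunP => i; move: (e i); rewrite !ffunE.
by case: (u0 i); case: (u1 i); case: (u2 i) => //= h; rewrite h.
Qed.

Definition Tbar (R : realType) (N : nat) (T : sample N -> R) (s : sample N) : R :=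
  (#|{ffun 'I_N -> bool}|%:R)^-1 * \sum_(u : {ffun 'I_N -> bool}) T (sw u s).

Lemma inv_Tbar (R : realType) (N : nat) (T : sample N -> R) : inv (Tbar T).
Proof.
move=> s t /sw_exists ->; rewrite /Tbar; congr (_ * _).
set u0 := [ffun i => _].
have hinj := @xor_inj N u0.
rewrite [RHS](reindex_inj hinj) /=; apply: eq_bigr => u _.
rewrite sw_comp; congr (T (sw _ s)); apply/ffunP => i; rewrite !ffunE.
by rewrite addKb.
Qed.

Lemma inv_T (R : realType) (N : nat) : inv (T_est R (N:=N)).
Proof.
move=> s t h.
have e : forall i, uu R i s = uu R i t /\ vv R i s = vv R i t.
  move=> i; move: (h i); rewrite /Zs /uu /vv /bnat.
  case: (s.1 i); case: (s.2 i); case: (t.1 i); case: (t.2 i) => /= hz;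
    (try discriminate hz); split; ring.
rewrite !T_expand.
have e1 : \sum_i uu R i s = \sum_i uu R i t by apply: eq_bigr => i _; case: (e i).
have e2 : \sum_i vv R i s = \sum_i vv R i t by apply: eq_bigr => i _; case: (e i).
have e3 : \sum_i \sum_k (uu R i s * uu R k s) = \sum_i \sum_k (uu R i t * uu R k t).
  apply: eq_bigr => i _; apply: eq_bigr => k _.
  by case: (e i) => -> _; case: (e k) => -> _.
by rewrite e1 e2 e3.
Qed.

Lemma cross (R : realType) (N : nat) th (T h : sample N -> R) : inv h ->
  Exp th (fun s => T s * h s) = Exp th (fun s => Tbar T s * h s).
Proof.
move=> hh.
have cardW : (#|{ffun 'I_N -> bool}|%:R : R) != 0.
  by rewrite pnatr_eq0 -lt0n; apply/card_gt0P; exists [ffun=> false].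
have each : forall u, Exp th (fun s => T (sw u s) * h s) = Exp th (fun s => T s * h s).
  move=> u; rewrite /Exp [RHS](reindex_inj (can_inj (swK u))) /=.
  apply: eq_bigr => s _; rewrite pmf_sw (hh (sw u s) s) // => i.
  by rewrite Zs_sw.
set c := (#|{ffun 'I_N -> bool}|%:R : R)^-1.
have pt : forall s, model_pmf th s * (Tbar T s * h s) =
    c * \sum_(u : {ffun 'I_N -> bool}) model_pmf th s * (T (sw u s) * h s).
  move=> s; rewrite /Tbar -/c mulr_sumr mulr_suml mulr_sumr mulr_sumr.
  by apply: eq_bigr => u _; ring.
rewrite [RHS]/Exp (eq_bigr _ (fun s _ => pt s)) -mulr_sumr exchange_big /=.
rewrite (eq_bigr _ (fun u _ => each u)) sumr_const -mulr_natl mulrA /c mulVf //.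
by rewrite mul1r.
Qed.

Lemma Exp_th0 (R : realType) (N : nat) (th : param R N) f :
  (forall i, th.2 i = 0) -> Exp th f = Exp (th0 th.1) f.
Proof.
move=> h; apply: eq_bigr => s _; congr (_ * _); apply: eq_bigr => i _.
by rewrite h.
Qed.

Theorem corollary2 (R : realType) (N : nat) (Theta : param R N -> Prop) :
  (0 < N)%N ->
  (forall th, Theta th -> in_Rspace th) ->
  (forall th, Theta th -> forall i, th.2 i = 0) ->
  nondegenerate_param Theta ->
  UMVU Theta (T_est R (N:=N)) (@sigma2 R N).
Proof.
move=> N0 hR h0 [p0 [eps [he hbox]]].
have unb : unbiased Theta (T_est R (N:=N)) (@sigma2 R N).
  by move=> th hth; rewrite (Exp_th0 _ (h0 th hth)) ET.
split=> // T' hT' th hth.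
have TbT : forall s, Tbar T' s = T_est R s.
  have hD : @inv R N (fun s => Tbar T' s - T_est R s).
    by move=> s t e; rewrite (@inv_Tbar R N T' s t e) (@inv_T R N s t e).
  move=> s0; apply/eqP; rewrite -subr_eq0; apply/eqP.
  apply: (complete he hD) => q hq.
  have hq' : Theta (th0 q) := hbox q hq.
  rewrite (ExpB _ (fun s => Tbar T' s) (fun s => T_est R s)).
  have -> : Exp (th0 q) (fun s => Tbar T' s) = Exp (th0 q) T'.
    have := cross (th0 q) T' (h := fun _ => 1) (fun _ _ _ => erefl).
    rewrite /Exp => e; rewrite [RHS](eq_bigr (fun s => model_pmf (th0 q) s * (T' s * 1))).
      by rewrite e; apply: eq_bigr => s _; rewrite mulr1.
    by move=> s _; rewrite mulr1.
  by rewrite (hT' _ hq') (unb _ hq') subrr.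
set g := Exp th (T_est R (N:=N)).
have eg : Exp th T' = g by rewrite /g (hT' _ hth) (unb _ hth).
rewrite /Var eg -/g.
have pmf0 : forall s, 0 <= model_pmf th s.
  move=> s; apply: prodr_ge0 => i _; rewrite (h0 th hth i).
  by apply: w_ge0; case: (hR th hth i).
have hinvg : @inv R N (fun s => T_est R s - g).
  by move=> s t e; rewrite (@inv_T R N s t e).
have cr : Exp th (fun s => T' s * (T_est R s - g)) = Exp th (fun s => T_est R s * (T_est R s - g)).
  rewrite (cross th T' hinvg); apply: eq_bigr => s _; by rewrite TbT.
have dec : Exp th (fun s => (T' s - g) ^+ 2) =
   Exp th (fun s => (T' s - T_est R s) ^+ 2)
   + 2 * (Exp th (fun s => T' s * (T_est R s - g)) - Exp th (fun s => T_est R s * (T_est R s - g)))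
   + Exp th (fun s => (T_est R s - g) ^+ 2).
  rewrite /Exp -sumrB mulr_sumr -!big_split /=.
  by apply: eq_bigr => s _; ring.
rewrite dec cr subrr mulr0 addr0 lerDr.
by apply: sumr_ge0 => s _; apply: mulr_ge0 => //; apply: sqr_ge0.
Qed.
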